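(* Let $(M,\Sigma)$ be a measurable space, $r\ge1$, and $\mu_1,\dots,\mu_r$ non-atomic countably additive finite measures on $\Sigma$. Let $(H_k)_{k\ge1}$ be measurable sets and $(h_k)_{k\ge1}$ indices in $\{1,\dots,r\}$ such that for every $k$: $H_k\subseteq M\setminus\bigcup_{i=1}^{k-1}H_i$, $H_k$ has a gentleman's solution (a partition $H_k=F_1\sqcup\dots\sqcup F_r$ with $\mu_i(F_i)\le\mu_i(F_j)$ for all $i,j$), and $\mu_{h_k}(H_k)\ge 2^{-(r-1)}\mu_{h_k}\bigl(M\setminus\bigcup_{i=1}^{k-1}H_i\bigr)$. Let $\ell\in\{1,\dots,r\}$ be an index with $h_k=\ell$ for infinitely many $k$, and let $M_\infty=M\setminus\bigsqcup_{i=1}^\infty H_i$. Then $\mu_\ell(M_\infty)=0$. *)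

(* Defs.v *)
From HB Require Import structures.
From mathcomp Require Import all_boot all_order all_algebra.
From mathcomp Require Import all_classical all_reals all_analysis.
Set Implicit Arguments. Unset Strict Implicit. Unset Printing Implicit Defensive.
Import Order.TTheory GRing.Theory Num.Theory.
Local Open Scope classical_set_scope.
Local Open Scope ring_scope.

Definition nonatomic d (T : measurableType d) (R : realType)
  (mu : set T -> \bar R) : Prop :=
  forall A, measurable A -> (0 < mu A)%E ->
    exists B, [/\ measurable B, B `<=` A & (0 < mu B < mu A)%E].

Definition gentleman_solution d (T : measurableType d) (R : realType) (r : nat)
  (mu : 'I_r -> set T -> \bar R) (H : set T) : Prop :=
  exists F : 'I_r -> set T,
    [/\ forall i, measurable (F i),
        H = \big[setU/set0]_(i < r) F i,
        forall i j, i != j -> F i `&` F j = set0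
      & forall i j, (mu i (F i) <= mu i (F j))%E].

(* Main.v *)
Require Import Defs.
From HB Require Import structures.
From mathcomp Require Import all_boot all_order all_algebra.
From mathcomp Require Import all_classical all_reals all_analysis.
Import Order.TTheory GRing.Theory Num.Theory.
Local Open Scope classical_set_scope.
Local Open Scope ring_scope.

Theorem corollary4 (d : measure_display) (T : measurableType d) (R : realType)
  (r : nat) (hr : (1 <= r)%N)
  (mu : 'I_r -> {finite_measure set T -> \bar R})
  (mu_na : forall i, nonatomic (mu i))
  (H : nat -> set T) (h : nat -> 'I_r)
  (H_meas : forall k, measurable (H k))
  (H_sub : forall k, H k `<=` ~` (\big[setU/set0]_(i < k) H i))
  (H_gent : forall k, gentleman_solution (fun i => mu i) (H k))
  (H_big : forall k,
     ((2 ^- r.-1)%:E * mu (h k) (~` (\big[setU/set0]_(i < k) H i))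
        <= mu (h k) (H k))%E)
  (l : 'I_r) (hl : forall N, exists2 k, (N <= k)%N & h k = l) :
  mu l (~` (\bigcup_k H k)) = 0%E.
Proof.
set U := fun n => \big[setU/set0]_(i < n) H i.
have Um : forall n, measurable (U n).
  by move=> n; rewrite /U -bigcup_mkord; apply: bigcup_measurable => k _.
have Amb : measurable (~` (\bigcup_k H k)) by apply: measurableC; exact: bigcupT_measurable.
set a := mu l _.
have a0 : (0 <= a)%E by apply: measure_ge0.
have afin : a \is a fin_num by apply: fin_num_measure.
apply/eqP; apply: contraT => an0.
have a'pos : 0 < fine a.
  by rewrite -lte_fin fineK // lt0e an0 a0.
set c : R := 2 ^- r.-1.
have c0 : 0 < c by rewrite /c invr_gt0 exprn_gt0.
set b := c * fine a.
have b0 : 0 < b by rewrite mulr_gt0.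
have claim1 : forall k, h k = l -> (b%:E <= mu l (H k))%E.
  move=> k hk; rewrite -hk; apply: le_trans _ (H_big k); rewrite hk /b EFinM fineK //.
  apply: lee_wpmul2l; first by rewrite lee_fin ltW.
  apply: le_measure; rewrite ?inE //; try exact: Amb; try (apply: measurableC; exact: (Um k)).
  move=> x Ax Ux; apply: Ax; move: Ux; rewrite /U -bigcup_mkord => -[i _ Hx].
  by exists i.
have Uinc : forall n k, (n <= k)%N -> U n `<=` U k.
  move=> n k nk x; rewrite /U -!bigcup_mkord => -[i /= ilt Hx]; exists i => //=.
  exact: leq_trans ilt nk.
have claim2 : forall m : nat, exists n, ((m%:R * b)%:E <= mu l (U n))%E.
  elim=> [|m [n IH]]; first by exists 0%N; rewrite mul0r; apply: measure_ge0.
  have [k nk hk] := hl n.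
  exists k.+1.
  have -> : U k.+1 = U k `|` H k by rewrite /U big_ord_recr.
  rewrite measureU //; last first.
    by apply/seteqP; split => // x [Ux Hx]; exact: (H_sub k _ Hx Ux).
  rewrite -natr1 mulrDl mul1r EFinD; apply: leeD; last exact: claim1.
  apply: le_trans IH _; apply: le_measure; rewrite ?inE //; exact: Uinc.
have tfin : mu l setT \is a fin_num by apply: fin_num_measure.
set t := fine (mu l setT).
have t0 : 0 <= t by rewrite /t fine_ge0 // measure_ge0.
have := archi_boundP (divr_ge0 t0 (ltW b0)).
set m := Num.Def.archi_bound _ => hm.
have [n hn] := claim2 m.
have : ((m%:R * b)%:E <= t%:E)%E.
  apply: le_trans hn _; rewrite /t fineK //; apply: le_measure; rewrite ?inE //.
rewrite lee_fin -ler_pdivlMr // => hle.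
by move: (lt_le_trans hm hle); rewrite ltxx.
Qed.
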